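(* Let $t$ be a positive integer and let $G$ be a graph with no odd $K_t$ minor. Then $$\chi(G) \le 2t\left(1+\log\left(\frac{|V(G)|}{t}\right)\right).$$
   Context: Graphs are finite and simple; $\chi$ is the chromatic number; $\log$ is the natural logarithm. A graph $G$ has an odd $K_t$ minor if a graph isomorphic to $K_t$ (complete graph on $t$ vertices) can be obtained from a subgraph $G'$ of $G$ by contracting a set of edges forming a cut in $G'$ (the empty set is a cut). *)

(* Defs.v *)
From mathcomp Require Import all_boot.
From Stdlib Require Import Reals.

Set Implicit Arguments.
Unset Strict Implicit.
Unset Printing Implicit Defensive.

Section Graphs.
Variable T : finType.

(* A (finite simple) graph on T is an adjacency relation e : rel T that is
   symmetric and irreflexive; these hypotheses appear in the theorem. *)

Definition proper_coloring (e : rel T) (k : nat) (c : {ffun T -> 'I_k}) : bool :=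
  [forall x, forall y, e x y ==> (c x != c y)].

Definition colorable (e : rel T) (k : nat) : bool :=
  [exists c : {ffun T -> 'I_k}, proper_coloring e c].

(* chi(G): the least k such that G is k-colourable (for loopless graphs
   #|T| colours always suffice, so the minimum is over k <= #|T|). *)
Definition chromatic_number (e : rel T) : nat :=
  \big[minn/#|T|]_(k < #|T|.+1 | colorable e k) (k : nat).

(* Odd K_t minor, literally as in the paper: there is a subgraph G' = (S, E')
   of G and a cut F of G' (the G'-edges between X and S \ X, for some X) such
   that contracting F yields a graph isomorphic to K_t.  The vertices of the
   contracted graph are the classes of S under connectivity by F-edges; phi
   identifies these classes with 'I_t (bijectively: phi is onto and
   phi x = phi y iff x, y are F-connected), and two distinct classes are
   adjacent iff some E'-edge joins them; isomorphism with K_t means every pair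
   of distinct classes is adjacent. *)
Definition has_odd_Kt_minor (e : rel T) (t : nat) : Prop :=
  exists (S : {set T}) (E' : rel T) (X : {set T}) (phi : T -> 'I_t),
    [/\ (forall x y, E' x y -> [/\ e x y, x \in S & y \in S]),
        symmetric E',
        let F := fun x y => E' x y && ((x \in X) != (y \in X)) in
        forall x y, x \in S -> y \in S ->
          (phi x == phi y) = connect F x y,
        (forall i : 'I_t, exists2 x, x \in S & phi x = i)
      & (forall i j : 'I_t, i != j ->
           exists x y, [/\ E' x y, phi x = i & phi y = j])].

End Graphs.

(* Main.v *)
Require Import Defs.
From mathcomp Require Import all_boot.
From mathcomp Require Import zify.
From Stdlib Require Import Reals Classical Lra Lia.

Set Implicit Arguments.
Unset Strict Implicit.
Unset Printing Implicit Defensive.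

Lemma ln_lb x : (0 < x -> 1 - / x <= ln x)%R.
Proof.
move=> x0; have := exp_ineq1_le (- ln x).
rewrite exp_Ropp exp_ln //; lra.
Qed.

Lemma ln_ge0 x : (1 <= x -> 0 <= ln x)%R.
Proof.
move=> x1; have := @ln_lb x ltac:(lra).
have : (/ x <= 1)%R by rewrite -Rinv_1; apply: Rinv_le_contravar; lra.
lra.
Qed.

Lemma Bge (t m k : nat) : (0 < t)%N -> (t <= m)%N -> (k <= 2 * t)%N ->
  (INR k <= 2 * INR t * (1 + ln (INR m / INR t)))%R.
Proof.
move=> /leP t0 /leP tm /leP k2.
have T0 : (0 < INR t)%R by apply: lt_0_INR.
have Tm : (INR t <= INR m)%R by apply: le_INR.
have K2 : (INR k <= 2 * INR t)%R.
  by rewrite -[2%R]/(INR 2); rewrite -mult_INR; apply: le_INR.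
have q : (INR m / INR t * INR t = INR m)%R by field; lra.
have L : (0 <= ln (INR m / INR t))%R.
  apply: ln_ge0; nra.
nra.
Qed.

Lemma Bstep (t m m' i k : nat) : (0 < t)%N -> (t <= m')%N -> m = (m' + i)%N -> (m <= 2 * t * i)%N ->
  (INR k <= 2 * INR t * (1 + ln (INR m' / INR t)))%R ->
  (INR k.+1 <= 2 * INR t * (1 + ln (INR m / INR t)))%R.
Proof.
move=> /leP t0 /leP tm -> /leP hi hk.
have T0 : (0 < INR t)%R by apply: lt_0_INR.
have Tm : (INR t <= INR m')%R by apply: le_INR.
have I2 : (INR (m' + i) <= 2 * INR t * INR i)%R.
  by rewrite -[2%R]/(INR 2) -!mult_INR; apply: le_INR.
rewrite plus_INR in I2 *.
rewrite S_INR.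
have M0 : (0 < INR m')%R by lra.
have Ii : (0 <= INR i)%R by apply: pos_INR.
have e1 : (INR m' / INR t * ((INR m' + INR i) / INR m') = (INR m' + INR i) / INR t)%R by field; lra.
have p1 : (0 < INR m' / INR t)%R by apply: Rdiv_lt_0_compat.
have p2 : (0 < (INR m' + INR i) / INR m')%R by apply: Rdiv_lt_0_compat; lra.
rewrite -e1 ln_mult //.
have := ln_lb p2.
have e2 : (/ ((INR m' + INR i) / INR m') = INR m' / (INR m' + INR i))%R by field; lra.
rewrite e2 => h.
have q : (INR m' / (INR m' + INR i) * (INR m' + INR i) = INR m')%R by field; lra.
have key : (1 <= 2 * INR t * (1 - INR m' / (INR m' + INR i)))%R by nra.
nra.
Qed.

Section Main.
Variable T : finType.
Variable e : rel T.
Hypothesis esym : symmetric e.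
Hypothesis eirr : irreflexive e.

Definition oddm (U : {set T}) (t : nat) : Prop :=
  exists (S : {set T}) (E' : rel T) (X : {set T}) (phi : T -> 'I_t),
    S \subset U /\
    [/\ (forall x y, E' x y -> [/\ e x y, x \in S & y \in S]),
        symmetric E',
        let F := fun x y => E' x y && ((x \in X) != (y \in X)) in
        forall x y, x \in S -> y \in S ->
          (phi x == phi y) = connect F x y,
        (forall i : 'I_t, exists2 x, x \in S & phi x = i)
      & (forall i j : 'I_t, i != j ->
           exists x y, [/\ E' x y, phi x = i & phi y = j])].

Lemma oddm_mono (U V : {set T}) t : U \subset V -> oddm U t -> oddm V t.
Proof.
move=> sUV [S [E' [X [phi [sSU H]]]]].
by exists S, E', X, phi; split=> //; apply: subset_trans sUV.
Qed.

Lemma eqb_neq (a c b : bool) : ((a == b) != (c == b)) = (a != c).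
Proof. by case: a; case: b; case: c. Qed.

Lemma connect_lift (F G : rel T) (P : pred T) x y :
  P x -> (forall u w, P u -> F u w -> G u w && P w) ->
  connect F x y -> connect G x y && P y.
Proof.
move=> Px H /connectP [p pth ->].
elim: p x Px pth => [|z p IH] x Px /=; first by rewrite connect0.
case/andP=> Fxz pth.
have /andP[Gxz Pz] := H _ _ Px Fxz.
have /andP[c Pl] := IH z Pz pth.
by rewrite Pl andbT (connect_trans (connect1 Gxz) c).
Qed.

Lemma ext t (R C SC : {set T}) (EC : rel T) v :
  SC \subset C -> v \in SC ->
  (forall x y, EC x y -> [/\ e x y, x \in C, y \in C & (x \in SC) != (y \in SC)]) ->
  symmetric EC ->
  (forall x, x \in C -> connect EC v x) ->
  (forall x, x \in R -> x \notin C) ->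
  (forall r, r \in R -> exists2 s, s \in SC & e r s) ->
  oddm R t -> oddm (C :|: R) t.+1.
Proof.
move=> sSC vS hEC symEC conC dRC adjR [SR [ER [XR [phiR [sSR [hER symER hphi honto hadj]]]]]].
have hb : exists b, forall i, exists2 x, x \in SR & (phiR x = i /\ (x \in XR) = b).
  case: (classic (exists i0, forall x, x \in SR -> phiR x = i0 -> x \notin XR)).
    case=> i0 Hi0; exists false => i.
    case: (eqVneq i i0) => [->|ne].
      have [x xS px] := honto i0; exists x => //; split => //.
      by apply/negbTE; apply: Hi0.
    have [x [y [Exy px py]]] := hadj i i0 ne.
    have [_ xS yS] := hER _ _ Exy.
    exists x => //; split => //.
    have yX : y \notin XR by apply: Hi0.
    apply/negbTE/negP => xX.
    have : connect (fun x y => ER x y && ((x \in XR) != (y \in XR))) x y.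
      by apply: connect1; rewrite Exy xX (negbTE yX).
    by rewrite -(hphi x y xS yS) px py (negbTE ne).
  move=> nH; exists true => i.
  apply: NNPP => nx; apply: nH; exists i => x xS px.
  by apply/negP => xX; apply: nx; exists x.
case: hb => b hb.
have SRnC : forall x, x \in SR -> x \notin C by move=> x /(subsetP sSR); apply: dRC.
have SRnSC : forall x, x \in SR -> x \notin SC.
  by move=> x /SRnC; apply: contra; apply: (subsetP sSC).
pose X' := SC :|: [set x in SR | (x \in XR) == b].
have XC : forall x, x \in C -> (x \in X') = (x \in SC).
  move=> x xC; rewrite !inE; case: (x \in SC) => //=.
  by apply/negbTE/negP => /andP[/SRnC]; rewrite xC.
have XR' : forall x, x \in SR -> (x \in X') = ((x \in XR) == b).
  by move=> x xS; rewrite !inE (negbTE (SRnSC x xS)) xS.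
pose phi' := fun x => if x \in C then ord_max else widen_ord (leqnSn t) (phiR x).
pose Conn := fun x y => [&& x \in SR, (x \in XR) == b, y \in SC & e x y].
pose E' := fun x y => [|| ER x y, EC x y, Conn x y | Conn y x].
exists (C :|: SR), E', X', phi'; split.
  by apply/subsetP => x; rewrite !inE; case/orP=> [->//|/(subsetP sSR) ->]; rewrite orbT.
split.
- move=> x y; rewrite /E' => /or4P [/hER [exy xS yS]|/hEC [exy xC yC _]|/and4P[xS _ yS exy]|/and4P[yS _ xS eyx]];
  rewrite !inE ?xS ?yS ?xC ?yC ?orbT //.
  + by rewrite (subsetP sSC _ yS).
  + by rewrite (subsetP sSC _ xS) esym.
- move=> x y; rewrite /E' symER symEC.
  by case: (Conn x y); case: (Conn y x); rewrite ?orbT ?orbF.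
- move=> F x y.
  have FC : forall u w, u \in C -> F u w -> F u w && (w \in C).
    move=> u w uC Fuw; rewrite Fuw /=; move: Fuw; rewrite /F /E'.
    case/andP=> /or4P [/hER [_ uS _]|/hEC [_ _ ->//]|/and4P[uS _ _ _]|/and4P[wS wb uS _]].
    + by move: (SRnC u uS); rewrite uC.
    + by move: (SRnC u uS); rewrite uC.
    + by rewrite (XR' w wS) wb !inE uS.
  have FSR : forall u w, u \in SR -> F u w ->
      (ER u w && ((u \in XR) != (w \in XR))) && (w \in SR).
    move=> u w uS; rewrite /F /E'.
    case/andP=> /or4P [Euw|/hEC [_ uC _]|/and4P[_ ub wS _]|/and4P[_ _ uSC _]].
    + have [_ _ wS] := hER _ _ Euw.
      rewrite Euw wS (XR' u uS) (XR' w wS) andbT /=.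
      by rewrite eqb_neq.
    + by move: (SRnC u uS); rewrite uC.
    + by rewrite (XR' u uS) ub !inE wS.
    + by move: (SRnSC u uS); rewrite uSC.
  have FRS : forall u w, u \in SR -> ER u w && ((u \in XR) != (w \in XR)) ->
      F u w && (w \in SR).
    move=> u w uS /andP[Euw nX]; have [_ _ wS] := hER _ _ Euw.
    rewrite wS /F /E' Euw /= (XR' u uS) (XR' w wS) andbT.
    by rewrite eqb_neq.
  have ECF : forall u w, u \in C -> EC u w -> F u w && (w \in C).
    move=> u w uC Euw; have [_ _ wC nS] := hEC _ _ Euw.
    by rewrite wC /F /E' Euw orbT /= (XC u uC) (XC w wC) nS.
  have wE : forall a c : 'I_t, (widen_ord (leqnSn t) a == widen_ord (leqnSn t) c) = (a == c).
    by move=> a c; apply/eqP/eqP => [h|->//]; apply/val_inj; exact: (congr1 val h).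
  have ltw : forall a : 'I_t, widen_ord (leqnSn t) a != ord_max.
    by move=> a; rewrite -val_eqE /= neq_ltn ltn_ord.
  move=> xS yS; move: xS yS; rewrite !inE.
  case/orP=> [xC|xS]; case/orP=> [yC|yS].
  + rewrite /phi' xC yC eqxx; symmetry.
    have cxv : connect EC x v.
      by rewrite (sym_connect_sym symEC); apply: conC.
    have /andP[] // := connect_lift (P := fun z => z \in C) xC ECF (connect_trans cxv (conC y yC)).
  + rewrite /phi' xC (negbTE (SRnC y yS)) eq_sym (negbTE (ltw _)); symmetry.
    apply/negbTE/negP => cxy.
    have /andP[_] := connect_lift (P := fun z => z \in C) xC FC cxy.
    by rewrite /= (negbTE (SRnC y yS)).
  + rewrite /phi' yC (negbTE (SRnC x xS)) (negbTE (ltw _)); symmetry.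
    apply/negbTE/negP => cxy.
    have /andP[_] := connect_lift (P := fun z => z \in SR) xS FSR cxy.
    by move/SRnC; rewrite yC.
  + rewrite /phi' (negbTE (SRnC x xS)) (negbTE (SRnC y yS)) wE (hphi x y xS yS).
    apply/idP/idP => c.
      by have /andP[] := connect_lift (P := fun z => z \in SR) xS FRS c.
    by have /andP[] := connect_lift (P := fun z => z \in SR) xS FSR c.
- move=> i; case: (unliftP ord_max i) => [j ->|->].
    have [x xS px] := honto j; exists x; first by rewrite inE xS orbT.
    by rewrite /phi' (negbTE (SRnC x xS)); apply/val_inj; rewrite /= px; symmetry; apply: lift_max.
  have vC := subsetP sSC v vS.
  by exists v; rewrite /phi' ?inE ?vC.
- have lE : forall a x, x \in SR -> phiR x = a -> phi' x = lift ord_max a.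
    by move=> a x xS px; rewrite /phi' (negbTE (SRnC x xS)); apply/val_inj; rewrite /= px; symmetry; apply: lift_max.
  have mE : forall s, s \in SC -> phi' s = ord_max.
    by move=> s sS; rewrite /phi' (subsetP sSC s sS).
  move=> i j; case: (unliftP ord_max i) => [a ->|->]; case: (unliftP ord_max j) => [c ->|->] ne.
  + have ac : a != c by apply: contraNneq ne => ->.
    have [x [y [Exy px py]]] := hadj a c ac; have [_ xS yS] := hER _ _ Exy.
    by exists x, y; split; [rewrite /E' Exy | apply: lE | apply: lE].
  + have [x xS [px xb]] := hb a; have [s sS exs] := adjR x (subsetP sSR x xS).
    exists x, s; split; [|exact: lE|exact: mE].
    by rewrite /E' /Conn xS xb eqxx sS exs !orbT.
  + have [x xS [px xb]] := hb c; have [s sS exs] := adjR x (subsetP sSR x xS).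
    exists s, x; split; [|exact: mE|exact: lE].
    by rewrite /E' /Conn xS xb eqxx sS exs !orbT.
  + by rewrite eqxx in ne.
Qed.


Definition nbhd (U S : {set T}) := [set x in U | (x \in S) || [exists s in S, e x s]].

Definition ginv (U C S : {set T}) (E : rel T) v :=
  [/\ S \subset C, C \subset U, v \in S,
      (forall x y, x \in S -> y \in S -> ~~ e x y) & (#|C|.+1 <= 2 * #|S|)%N] /\
  [/\ (forall x y, E x y -> [/\ e x y, x \in C, y \in C & (x \in S) != (y \in S)]),
      symmetric E, (forall x, x \in C -> connect E v x)
    & (forall x, x \in C -> (x \in S) || [exists s in S, e x s])].

Definition gclosed (U S : {set T}) :=
  forall x y, x \in nbhd U S -> y \in U -> e x y -> y \in nbhd U S.

Lemma card_arith (b : bool) c s : c < 2 * s -> b + (1 + c) < 2 * (1 + s).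
Proof. case: b => /=; lia. Qed.

Lemma gstep U C S E v : ginv U C S E v -> ~ gclosed U S ->
  exists C' S' E', ginv U C' S' E' v /\ (#|U :\: C'| < #|U :\: C|)%N.
Proof.
move=> [[sSC sCU vS stS cardS] [hE symE conE domC]] ncl.
have [x [y [xN yU exy yN]]] : exists x y, [/\ x \in nbhd U S, y \in U, e x y & y \notin nbhd U S].
  apply: NNPP => H; apply: ncl => x y xN yU exy; apply: NNPP => yN'; apply: H.
  by exists x, y; split => //; apply/negP.
move: (yN); rewrite inE yU /= negb_or => /andP[yS /existsPn yNS].
have yNS' : forall s, s \in S -> ~~ e y s.
  by move=> s sS; have := yNS s; rewrite sS.
move: (xN); rewrite inE => /andP[xU /orP[xS|/existsP[s /andP[sS exs]]]].
  by move: (yNS' x xS); rewrite esym exy.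
have xS : x \notin S by apply/negP => xS; move: (yNS' x xS); rewrite esym exy.
have yC : y \notin C.
  apply/negP => yC; have := domC y yC; rewrite (negbTE yS) /= => /existsP[s' /andP[s'S eys']].
  by move: (yNS' s' s'S); rewrite eys'.
have xy : x != y by apply/negP => /eqP xy; move: yN; rewrite -xy xN.
have sC := subsetP sSC s sS.
have sy : (s == y) = false by apply/negbTE; apply: contraNneq yS => <-.
have esxy : e y x by rewrite esym.
have esxs : e s x by rewrite esym.
pose E' := fun a b => [|| E a b, (a == x) && (b == y), (a == y) && (b == x),
                         (a == s) && (b == x) | (a == x) && (b == s)].
have Esub : forall a b, connect E a b -> connect E' a b.
  move=> a b c.
  have H : forall u w, predT u -> E u w -> E' u w && predT w.
    by move=> u w _ Euw; rewrite /E' Euw.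
  by case/andP: (connect_lift (isT : predT a) H c).
exists (x |: (y |: C)), (y |: S), E'; split; last first.
  apply: proper_card; apply/properP; split.
    by apply/subsetP => z; rewrite !inE => /andP[/norP[_ /norP[_ ->]] ->].
  by exists y; rewrite !inE ?yU ?(negbTE yC) ?eqxx ?orbT.
split; split.
- apply/subsetP => z; rewrite !inE => /orP[->|/(subsetP sSC) ->]; by rewrite ?orbT.
- by apply/subsetP => z; rewrite !inE => /orP[/eqP->//|/orP[/eqP->//|/(subsetP sCU)]].
- by rewrite inE vS orbT.
- move=> a b; rewrite !inE => /orP[/eqP->|aS] /orP[/eqP->|bS].
  + by rewrite eirr.
  + exact: yNS'.
  + by rewrite esym; apply: yNS'.
  + exact: stS.
- rewrite !cardsU1 yS yC.
  exact: card_arith cardS.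
- move=> a b; rewrite /E' => /orP[Eab|/orP[|/orP[|/orP[|]]]].
  + have [eab aC bC nS] := hE _ _ Eab.
    have ay : (a == y) = false by apply/negbTE; apply: contraNneq yC => <-.
    have by' : (b == y) = false by apply/negbTE; apply: contraNneq yC => <-.
    by rewrite !inE aC bC ay by' !orbT.
  + case/andP=> /eqP-> /eqP->; split; rewrite ?inE ?eqxx /= ?orbT ?exy ?esxy ?(negbTE xS) ?(negbTE xy) ?sC ?orbT //.
  + case/andP=> /eqP-> /eqP->; split; rewrite ?inE ?eqxx /= ?orbT ?esxy ?(negbTE xS) ?(negbTE xy) ?sC ?orbT //.
  + case/andP=> /eqP-> /eqP->; split; rewrite ?inE ?eqxx /= ?orbT ?esxs ?(negbTE xS) ?(negbTE xy) ?sC ?sS ?sy ?orbT //.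
  + case/andP=> /eqP-> /eqP->; split; rewrite ?inE ?eqxx /= ?orbT ?exs ?(negbTE xS) ?(negbTE xy) ?sC ?sS ?sy ?orbT //.
- move=> a b; rewrite /E' symE; case: (E b a) => //=.
  by apply/idP/idP => /or4P[]/andP[/eqP-> /eqP->]; rewrite !eqxx /= ?orbT.
- have cvx : connect E' v x.
    apply: (connect_trans (Esub _ _ (conE s sC))); apply: connect1.
    by rewrite /E' !eqxx /= ?orbT.
  move=> z; rewrite !inE => /orP[/eqP->//|/orP[/eqP->|zC]].
    by apply: (connect_trans cvx); apply: connect1; rewrite /E' !eqxx /= ?orbT.
  exact: Esub (conE z zC).
- move=> z; rewrite !inE => /orP[/eqP->|/orP[/eqP->|zC]].
  + apply/orP; right; apply/existsP; exists s; by rewrite inE sS orbT exs.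
  + by rewrite eqxx.
  + case/orP: (domC z zC) => [->|/existsP[s' /andP[s'S es']]]; first by rewrite orbT.
    apply/orP; right; apply/existsP; exists s'; by rewrite inE s'S orbT es'.
Qed.

Lemma grow (U : {set T}) v : v \in U -> exists C S E, ginv U C S E v /\ gclosed U S.
Proof.
move=> vU.
have init : ginv U [set v] [set v] (fun _ _ => false) v.
  split; split.
  - exact: subxx.
  - by rewrite sub1set.
  - by rewrite inE.
  - by move=> x y /set1P-> /set1P->; rewrite eirr.
  - by rewrite cards1.
  - by [].
  - by [].
  - by move=> x /set1P->; rewrite connect0.
  - by move=> x /set1P->; rewrite inE eqxx.
suff H : forall n C S E, #|U :\: C| <= n -> ginv U C S E v ->
    exists C' S' E', ginv U C' S' E' v /\ gclosed U S'.
  exact: H (leqnn _) init.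
elim=> [|n IH] C S E hn hi; case: (classic (gclosed U S)) => cl; try by exists C, S, E.
  have [C' [S' [E' [hi' lt]]]] := gstep hi cl.
  by move: (leq_trans lt hn); rewrite ltn0.
have [C' [S' [E' [hi' lt]]]] := gstep hi cl.
by apply: (IH C' S' E') hi'; rewrite -ltnS (leq_trans lt hn).
Qed.

Definition stableset (I : {set T}) := forall x y, x \in I -> y \in I -> ~~ e x y.

Lemma alpha_base (U : {set T}) : ~ oddm U 1 -> U = set0.
Proof.
move=> H; apply/setP=> v; rewrite inE; apply/negP => vU; apply: H.
exists [set v], (fun _ _ => false), set0, (fun _ => ord0); split; first by rewrite sub1set.
split => //.
- by move=> F x y /set1P-> /set1P->; rewrite eqxx connect0.
- by move=> i; exists v; rewrite ?inE // [i]ord1.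
- by move=> i j; rewrite [i]ord1 [j]ord1 eqxx.
Qed.

Lemma arith1 t k c r s a : c < 2*s -> r <= 2*t.+1*a -> k = c + r -> 2*t.+2*s < k -> k <= 2*t.+2*a.
Proof. move=> h1 h2 h3 h4. nia. Qed.

Lemma arith2 t k u s i : k <= 2 * t * s -> u <= 2 * t * i -> k + u <= 2 * t * (s + i).
Proof. move=> h1 h2. nia. Qed.

Lemma alpha t : 0 < t -> forall U, ~ oddm U t ->
  exists I : {set T}, [/\ I \subset U, stableset I & #|U| <= 2 * t * #|I|].
Proof.
elim: t => [//|t IHt] _.
case: t IHt => [_|t IHt] U.
  move=> /alpha_base ->; exists set0; split; rewrite ?sub0set ?cards0 //.
  by move=> x y; rewrite inE.
have IH := IHt isT.
suff H : forall n (U : {set T}), #|U| <= n -> ~ oddm U t.+2 ->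
    exists I : {set T}, [/\ I \subset U, stableset I & #|U| <= 2 * t.+2 * #|I|].
  exact: H (leqnn _).
elim=> [|n IHn] {}U hn hU.
  exists set0; split; rewrite ?sub0set ?cards0 ?muln0 //.
  by move=> x y; rewrite inE.
case: (set_0Vmem U) => [->|[v vU]].
  exists set0; split; rewrite ?sub0set ?cards0 ?muln0 //.
  by move=> x y; rewrite inE.
have [C [S [E [[[sSC sCU vS stS cardS] [hE symE conE domC]] cl]]]] := grow vU.
pose K := nbhd U S.
pose R := K :\: C.
pose U' := U :\: K.
have KU : K \subset U by apply/subsetP => z; rewrite inE => /andP[].
have CK : C \subset K.
  by apply/subsetP => z zC; rewrite inE (subsetP sCU z zC) domC.
have vK : v \in K by apply: (subsetP CK); apply: (subsetP sSC).
have nR : ~ oddm R t.+1.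
  move=> hR; apply: hU; apply: oddm_mono _ (ext sSC vS hE symE conE _ _ hR).
    apply/subsetP => z; rewrite in_setU in_setD => /orP[/(subsetP sCU)//|/andP[_ /(subsetP KU)]//].
    by move=> z; rewrite inE => /andP[].
  move=> z; rewrite !inE => /andP[zC /andP[zU /orP[zS|/existsP[s /andP[sS ezs]]]]].
    by move: zC; rewrite (subsetP sSC z zS).
  by exists s.
have [IR [sIR stIR cIR]] := IH R nR.
have ltU : #|U'| < #|U|.
  apply: proper_card; apply/properP; split; first by apply/subsetP => z; rewrite inE => /andP[].
  by exists v; rewrite // inE vK.
have nU' : ~ oddm U' t.+2.
  by move=> h; apply: hU; apply: oddm_mono _ h; apply/subsetP => z; rewrite inE => /andP[].
have [I' [sI' stI' cI']] := IHn U' (leq_trans (leq_trans ltU hn) (leqnn _)) nU'.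
have un : forall A : {set T}, A \subset K -> stableset A ->
    [/\ A :|: I' \subset U, stableset (A :|: I') & #|A :|: I'| = #|A| + #|I'|].
  move=> A sAK stA.
  have AK : forall z, z \in A -> z \in K by move=> z; apply: (subsetP sAK).
  have I'K : forall z, z \in I' -> z \notin K /\ z \in U.
    by move=> z /(subsetP sI'); rewrite inE => /andP[].
  split.
  - apply/subsetP => z; rewrite inE => /orP[/AK/(subsetP KU)//|/I'K[]//].
  - move=> x y; rewrite !inE => /orP[xA|xI] /orP[yA|yI].
    + exact: stA.
    + apply/negP => exy; have [yK yU] := I'K y yI.
      by move: yK; rewrite (cl x y (AK x xA) yU exy).
    + apply/negP => exy; have [xK xU] := I'K x xI.
      by move: xK; rewrite (cl y x (AK y yA) xU) // esym.
    + exact: stI'.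
  - rewrite cardsU; suff -> : A :&: I' = set0 by rewrite cards0 subn0.
    apply/setP => z; rewrite !inE; apply/negP => /andP[/AK zK /I'K[]].
    by rewrite zK.
have cU : #|U| = #|K| + #|U'|.
  by rewrite -(cardsID K U) (setIidPr KU).
have cK : #|K| = #|C| + #|R|.
  by rewrite -(cardsID C K) (setIidPr CK).
case: (leqP #|K| (2 * t.+2 * #|S|)) => hk.
  have [h1 h2 h3] := un S (subset_trans sSC CK) stS.
  exists (S :|: I'); split => //.
  by rewrite h3 cU; apply: arith2.
have sIRK : IR \subset K.
  by apply: subset_trans sIR _; apply/subsetP => z; rewrite inE => /andP[].
have [h1 h2 h3] := un IR sIRK stIR.
exists (IR :|: I'); split => //.
rewrite h3 cU; apply: arith2 => //.
exact: arith1 cardS cIR cK hk.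
Qed.

Lemma color t : (0 < t)%N -> ~ oddm setT t -> forall U : {set T},
  exists (k : nat) (c : T -> nat),
  [/\ (k <= #|U|)%N, (forall x, x \in U -> (c x < k)%N),
      (forall x y, x \in U -> y \in U -> e x y -> c x != c y)
    & ((t <= #|U|)%N -> (INR k <= 2 * INR t * (1 + ln (INR #|U| / INR t)))%R)].
Proof.
move=> t0 nT.
suff H : forall n (U : {set T}), (#|U| <= n)%N -> exists (k : nat) (c : T -> nat),
  [/\ (k <= #|U|)%N, (forall x, x \in U -> (c x < k)%N),
      (forall x y, x \in U -> y \in U -> e x y -> c x != c y)
    & ((t <= #|U|)%N -> (INR k <= 2 * INR t * (1 + ln (INR #|U| / INR t)))%R)].
  by move=> U; apply: H (leqnn _).
have emp : forall U : {set T}, #|U| = 0%N -> exists (k : nat) (c : T -> nat),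
  [/\ (k <= #|U|)%N, (forall x, x \in U -> (c x < k)%N),
      (forall x y, x \in U -> y \in U -> e x y -> c x != c y)
    & ((t <= #|U|)%N -> (INR k <= 2 * INR t * (1 + ln (INR #|U| / INR t)))%R)].
  move=> U /eqP; rewrite cards_eq0 => /eqP ->.
  exists 0%N, (fun _ => 0%N); split => //; first by move=> x; rewrite inE.
    by move=> x y; rewrite inE.
  rewrite cards0 leqn0 => /eqP t00; move: t0; by rewrite t00.
elim=> [|n IHn] U hn.
  by apply: emp; apply/eqP; rewrite -leqn0.
case: (set_0Vmem U) => [->|[v vU]]; first by apply: emp; rewrite cards0.
have nU : ~ oddm U t by move=> h; apply: nT; apply: oddm_mono _ h; apply: subsetT.
have [I [sI stI cI]] := alpha t0 nU.
pose U' := U :\: I.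
have cU : #|U| = (#|U'| + #|I|)%N.
  by rewrite addnC -(cardsID I U) (setIidPr sI).
have Ipos : (0 < #|I|)%N.
  rewrite lt0n; apply/negP => /eqP I0; move: cI; rewrite I0 muln0 leqn0 cards_eq0 => /eqP U0.
  by move: vU; rewrite U0 inE.
have ltU : (#|U'| < #|U|)%N by rewrite cU -addn1 leq_add2l.
have [k [c [kU cU' pc B]]] := IHn U' (leq_trans ltU hn).
exists k.+1, (fun x => if x \in I then k else c x); split.
- by rewrite cU (leq_ltn_trans kU) // -addn1 leq_add2l.
- move=> x xU; case: ifP => // xI; apply: ltnW; apply: cU'.
  by rewrite inE xI xU.
- move=> x y xU yU exy; case: ifP => xI; case: ifP => yI.
  + by move: (stI x y xI yI); rewrite exy.
  + by rewrite neq_ltn cU' ?orbT // inE yI yU.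
  + by rewrite neq_ltn cU' // inE xI xU.
  + by apply: pc => //; rewrite inE ?xI ?yI.
- move=> tU.
  case: (leqP #|U| (2 * t)) => hU.
    by apply: Bge => //; apply: leq_trans hU; rewrite (leq_ltn_trans kU) // -addn1 leq_add2l.
  case: (leqP t #|U'|) => tU'.
    by apply: (Bstep t0 tU' cU cI); apply: B.
  apply: Bge => //; apply: leq_trans (leq_pmull _ _) => //.
  exact: leq_ltn_trans kU tU'.
Qed.

End Main.

Lemma bigmin_le_seq (I : eqType) (r : seq I) (P : pred I) (F : I -> nat) idx i0 :
  i0 \in r -> P i0 -> (\big[minn/idx]_(i <- r | P i) F i <= F i0)%N.
Proof.
elim: r => [//|x r IH]; rewrite in_cons big_cons => /orP[/eqP<- ->|ir Pi].
  exact: geq_minl.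
case: (P x); last exact: IH.
by apply: leq_trans (geq_minr _ _) _; apply: IH.
Qed.

Unset Implicit Arguments.

Theorem corollary2p5 (T : finType) (e : rel T) (t : nat) :
  symmetric e -> irreflexive e ->
  (0 < t)%N -> (t <= #|T|)%N ->
  ~ has_odd_Kt_minor e t ->
  (INR (chromatic_number e) <=
     2 * INR t * (1 + ln (INR #|T| / INR t)))%R.
Proof.
move=> esym eirr t0 tT nodd.
have no : ~ oddm e setT t.
  by case=> [S [E' [X [phi [_ H]]]]]; apply: nodd; exists S, E', X, phi.
have [k [c [kU cU pc B]]] := color esym eirr t0 no setT.
rewrite cardsT in kU B.
have col : colorable e k.
  case: k kU cU pc B => [|k] kU cU pc B.
    have [x _] : exists x : T, true.
      by move: tT; rewrite -cardsT => /(leq_trans t0) /card_gt0P [x _]; exists x.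
    by move: (cU x (in_setT x)).
  apply/existsP; exists [ffun x => (inord (c x) : 'I_k.+1)].
  apply/forallP => x; apply/forallP => y; apply/implyP => exy; rewrite !ffunE.
  apply/negP => /eqP /(congr1 val); rewrite /= !inordK ?cU ?in_setT // => /eqP.
  by apply/negP; apply: pc; rewrite ?in_setT.
have chk : (chromatic_number e <= k)%N.
  rewrite /chromatic_number.
  have kT : (k < #|T|.+1)%N by rewrite ltnS.
  exact: (@bigmin_le_seq _ _ _ (fun i : 'I_#|T|.+1 => (i : nat)) _ (Ordinal kT) (mem_index_enum _) col).
apply: Rle_trans (B tT).
by apply: le_INR; apply/leP.
Qed.
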